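(* Let $n\ge 3$ and let $A=[a_{ij}]$ be a real $n\times n$ matrix with zero diagonal, and let $f:\Sigma_n\to\mathbb{R}$, $f(\sigma)=\sum_{i=1}^{n-1}\sum_{j=i+1}^n a_{\sigma(i)\sigma(j)}$, be the LOP objective function with input matrix $A$. Then $\hat f_{(n-2,1,1)}=0$ if and only if $a_{ij}-a_{ji}+a_{jk}-a_{kj}=a_{ik}-a_{ki}$ for all $i,j,k\in\{1,\dots,n\}$.
   Context: $\Sigma_n$ is the symmetric group on $\{1,\dots,n\}$; $\sigma(k)$ is the row/column index placed in position $k$. For a partition $\lambda$ of $n$, $\rho_\lambda$ denotes the irreducible (matrix) representation of $\Sigma_n$ indexed by $\lambda$, and the Fourier coefficient of $f$ at $\lambda$ is $\hat f_\lambda=\sum_{\sigma\in\Sigma_n}f(\sigma)\rho_\lambda(\sigma)$. *)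

(* Defs.v *)
From HB Require Import structures.
From mathcomp Require Import all_boot all_order all_algebra all_fingroup.
From mathcomp Require Import reals.
Set Implicit Arguments.
Unset Strict Implicit.
Unset Printing Implicit Defensive.
Import Order.TTheory GRing.Theory Num.Theory.
Local Open Scope ring_scope.

(* Permutations of {1,...,n} are modelled as 'S_n = {perm 'I_n}
   (indices shifted to 0,...,n-1). *)

Definition lop_obj (R : nzRingType) (n : nat) (A : 'M[R]_n) (s : 'S_n) : R :=
  \sum_(i < n) \sum_(j < n | (i < j)%N) A (s i) (s j).

Definition in_shape (sh : seq nat) (rc : nat * nat) : bool :=
  (rc.1 < size sh)%N && (rc.2 < nth 0%N sh rc.1)%N.

(* A Young tableau of shape sh (sh a partition of n) filled with 'I_n:
   an injective placement of the entries into the cells of sh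
   (t i = (row, column) of entry i).  Since sh has exactly n cells this is a
   bijection entries -> cells. *)
Definition is_tableau (n : nat) (sh : seq nat) (t : 'I_n -> nat * nat) : Prop :=
  injective t /\ forall i, in_shape sh (t i).

(* Tabloids are represented by their row functions r : 'I_n -> nat
   (entry i lies in row r i).  The permutation module M^sh is the space of
   R-valued functions on tabloids; a tabloid {r'} is the indicator of r'. *)
Definition same_rows (n : nat) (r1 r2 : 'I_n -> nat) : bool :=
  [forall i, r1 i == r2 i].

Definition colstab (n : nat) (t : 'I_n -> nat * nat) (p : 'S_n) : bool :=
  [forall i, (t (p i)).2 == (t i).2].

(* Polytabloid e_t = sum_{pi in C_t} sgn(pi) {pi t}, as a function on tabloids.
   The tabloid {pi t} has row function i |-> row_t (pi^-1 i). *)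
Definition polytabloid (R : nzRingType) (n : nat) (t : 'I_n -> nat * nat)
    (r : 'I_n -> nat) : R :=
  \sum_(p : 'S_n | colstab t p)
     (-1) ^+ odd_perm p * (same_rows r (fun i => (t ((p^-1)%g i)).1))%:R.

(* Left action of sigma on M: (sigma . v)(r) = v (r o sigma), so that
   sigma . {r'} = {r' o sigma^-1}. *)

(* The Fourier coefficient hat f_sh = sum_sigma f(sigma) rho_sh(sigma) is the
   matrix (in any basis) of the operator v |-> sum_sigma f(sigma) sigma . v on
   the Specht module S^sh = span of the polytabloids.  Hence hat f_sh = 0 iff
   this operator kills every polytabloid. *)
Definition fourier_vanishes (R : nzRingType) (n : nat) (f : 'S_n -> R)
    (sh : seq nat) : Prop :=
  forall t : 'I_n -> nat * nat, is_tableau sh t ->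
  forall r : 'I_n -> nat,
    \sum_(s : 'S_n) f s * polytabloid R t (fun i => r (s i)) = 0.

(* Main.v *)
Require Import Defs.
From HB Require Import structures.
From mathcomp Require Import all_boot all_order all_algebra all_fingroup.
From mathcomp Require Import reals.
From mathcomp Require Import lra zify.
Import Order.TTheory GRing.Theory Num.Theory.
Local Open Scope ring_scope.
Set Implicit Arguments.
Unset Strict Implicit.
Unset Printing Implicit Defensive.

Section Gen.
Variable R : realType.

Lemma same_rows_M n (p s : 'S_n) (r : 'I_n -> nat) (t : 'I_n -> nat * nat) :
  same_rows (fun i => r ((p * s)%g i)) (fun i => (t (p i)).1) =
  same_rows (fun i => r (s i)) (fun i => (t i).1).
Proof.
apply/forallP/forallP => H i.
  by have := H (p^-1%g i); rewrite permM permKV.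
by rewrite permM; apply: H.
Qed.

Lemma colstabV n t (p : 'S_n) : colstab t p^-1%g = colstab t p.
Proof.
apply/forallP/forallP => H i.
  by have := H (p i); rewrite permK eq_sym.
by have := H (p^-1%g i); rewrite permKV eq_sym.
Qed.

Lemma colstabM n t (p q : 'S_n) : colstab t p -> colstab t q -> colstab t (p * q)%g.
Proof.
move=> /forallP Hp /forallP Hq; apply/forallP => i.
by rewrite permM (eqP (Hq (p i))) Hp.
Qed.

Lemma colstabMl n t (u p : 'S_n) : colstab t u -> colstab t (u * p)%g = colstab t p.
Proof.
move=> Hu; apply/idP/idP => H; last exact: colstabM.
by rewrite -(mulKg u p); apply: colstabM => //; rewrite colstabV.
Qed.

Lemma alt_pair n (P : pred 'S_n) (u : 'S_n) (h : 'S_n -> R) :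
  odd_perm u -> (forall p, P (u * p)%g = P p) ->
  (forall p, P p -> h (u * p)%g = h p) ->
  \sum_(p | P p) (-1) ^+ odd_perm p * h p = 0.
Proof.
move=> Hu HP Hh.
set S := \sum_(p | P p) _.
have HS : S = - S.
  rewrite {1}/S (reindex_inj (mulgI u)) /= -sumrN.
  apply: eq_big => p; first by rewrite HP.
  rewrite HP => Pp; rewrite Hh // (odd_permM u p) Hu.
  by case: (odd_perm p); rewrite /= ?expr1 ?expr0 ?mulN1r ?mul1r ?opprK.
lra.
Qed.

Lemma expand n (f : 'S_n -> R) t (r : 'I_n -> nat) :
  \sum_(s : 'S_n) f s * polytabloid R t (fun i => r (s i)) =
  \sum_(s : 'S_n) (same_rows (fun i => r (s i)) (fun i => (t i).1))%:R *
     \sum_(p | colstab t p) (-1) ^+ odd_perm p * f (p * s)%g.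
Proof.
under eq_bigr do rewrite /polytabloid big_distrr.
rewrite exchange_big /=.
transitivity (\sum_(p | colstab t p) \sum_(s : 'S_n)
   (same_rows (fun i => r (s i)) (fun i => (t i).1))%:R *
   ((-1) ^+ odd_perm p * f (p * s)%g)); last first.
  rewrite exchange_big; apply: eq_bigr => s _; by rewrite big_distrr.
rewrite (reindex_inj invg_inj) /=.
apply: eq_big => p; first by rewrite colstabV.
move=> _; rewrite (reindex_inj (mulgI p)) /=.
apply: eq_bigr => s _.
rewrite odd_permV invgK same_rows_M.
by rewrite mulrCA mulrA mulrC.
Qed.

End Gen.


Section Back.
Variable R : realType.

Lemma diag_split n (S : 'I_n -> 'I_n -> R) (g : 'I_n -> 'I_n) :
  (forall u v, S u v = S v u) ->
  \sum_(i < n) \sum_(j < n) S (g i) (g j) =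
  \sum_(i < n) \sum_(j < n | (i < j)%N) S (g i) (g j) + \sum_(i < n) \sum_(j < n | (i < j)%N) S (g i) (g j)
  + \sum_(i < n) S (g i) (g i).
Proof.
move=> Hs.
have E : forall i, \sum_(j < n) S (g i) (g j) = \sum_(j < n | (i < j)%N) S (g i) (g j)
   + \sum_(j < n | (j < i)%N) S (g i) (g j) + S (g i) (g i).
  move=> i; rewrite [LHS](bigID (fun j : 'I_n => (i < j)%N)) /= -addrA; congr (_ + _).
  rewrite (bigD1 i) /= ?ltnn // addrC; congr (_ + _).
  apply: eq_bigl => j; rewrite -leqNgt ltn_neqAle andbC.
  by rewrite -val_eqE /= eq_sym.
rewrite (eq_bigr _ (fun i _ => E i)) !big_split /=; congr (_ + _ + _).
rewrite (exchange_big_dep xpredT) //=.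
by apply: eq_bigr => i _; apply: eq_bigr => j _; rewrite Hs.
Qed.

Lemma sym_const n (S : 'I_n -> 'I_n -> R) (q : 'S_n) :
  (forall u v, S u v = S v u) ->
  \sum_(i < n) \sum_(j < n | (i < j)%N) S (q i) (q j) = \sum_(i < n) \sum_(j < n | (i < j)%N) S i j.
Proof.
move=> Hs.
have E1 := diag_split q Hs.
have E2 := diag_split id Hs.
have F1 : \sum_(i < n) \sum_(j < n) S (q i) (q j) = \sum_(i < n) \sum_(j < n) S i j.
  rewrite [RHS](reindex_inj (perm_inj (s:=q))) /=.
  by apply: eq_bigr => i _; rewrite [RHS](reindex_inj (perm_inj (s:=q))).
have F2 : \sum_(i < n) S (q i) (q i) = \sum_(i < n) S i i.
  by rewrite [RHS](reindex_inj (perm_inj (s:=q))).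
simpl in E2. lra.
Qed.

End Back.


Section Spec.
Variable m : nat.
Local Notation N := m.+3.

Definition code (rc : nat * nat) : nat :=
  if rc.1 == 0%N then rc.2 else if rc.1 == 1%N then m.+1 else m.+2.

Definition shp := [:: (N - 2)%N; 1%N; 1%N].

Lemma in_shapeE rc : in_shape shp rc ->
  [\/ rc.1 = 0%N /\ (rc.2 < m.+1)%N, rc = (1, 0)%N | rc = (2, 0)%N].
Proof.
case: rc => r c; rewrite /in_shape /shp /=.
case: r => [|[|[|r]]] //=; rewrite ?subSS ?subn0.
- by move=> h; apply: Or31.
- by move=> h; have -> : c = 0%N by [lia]; apply: Or32.
- by move=> h; have -> : c = 0%N by [lia]; apply: Or33.
Qed.

Lemma code_lt rc : in_shape shp rc -> (code rc < N)%N.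
Proof.
case: rc => r c; case/in_shapeE => [[/= -> h]|[-> ->]|[-> ->]]; rewrite /code /=; lia.
Qed.

Lemma code_inj rc1 rc2 : in_shape shp rc1 -> in_shape shp rc2 ->
  code rc1 = code rc2 -> rc1 = rc2.
Proof.
case: rc1 => r1 c1; case: rc2 => r2 c2.
case/in_shapeE => [[/= -> h1]|[-> ->]|[-> ->]];
case/in_shapeE => [[/= -> h2]|[-> ->]|[-> ->]]; rewrite /code /= => e //;
  try lia.
by rewrite e.
Qed.

Lemma code_col rc : in_shape shp rc -> code rc \in [:: 0%N; m.+1; m.+2] -> rc.2 = 0%N.
Proof.
case: rc => r c; case/in_shapeE => [[/= -> h]|[-> ->]|[-> ->]] //; rewrite /code /= !inE.
case/or3P => /eqP ec //; lia.
Qed.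

Lemma three_col (t : 'I_N -> nat * nat) : is_tableau shp t ->
  exists a b c, [/\ a != b, a != c, b != c & [/\ (t a).2 = 0%N, (t b).2 = 0%N & (t c).2 = 0%N]].
Proof.
move=> [tinj tsh].
pose g i := Ordinal (code_lt (tsh i)).
have ginj : injective g.
  move=> i j /(congr1 val) /= e; apply: tinj; exact: code_inj (tsh i) (tsh j) e.
have [g' gK g'K] := injF_bij ginj.
have o0 : (0 < N)%N by []. have o1 : (m.+1 < N)%N by []. have o2 : (m.+2 < N)%N by [].
exists (g' (Ordinal o0)), (g' (Ordinal o1)), (g' (Ordinal o2)).
have cc : forall k (hk : (k < N)%N), k \in [:: 0%N; m.+1; m.+2] -> (t (g' (Ordinal hk))).2 = 0%N.
  move=> k hk hin; apply: code_col (tsh _) _.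
  by have /(congr1 val) /= -> := g'K (Ordinal hk).
split; first 3 last.
- by split; apply: cc; rewrite !inE eqxx ?orbT.
all: apply/negP => /eqP /(congr1 g); rewrite !g'K => /(congr1 val) /=; lia.
Qed.

End Spec.


Lemma tperm_colstab n (t : 'I_n -> nat * nat) a b :
  (t a).2 = (t b).2 -> colstab t (tperm a b).
Proof.
move=> e; apply/forallP => i.
by case: tpermP => [->|->|] //; rewrite e.
Qed.

Section Back2.
Variable R : realType.
Variable m : nat.
Local Notation N := m.+3.

Lemma fix_odd (t : 'I_N -> nat * nat) : is_tableau (shp m) t ->
  forall k, exists u, [/\ odd_perm u, colstab t u & u k = k].
Proof.
move=> tt k; have [a [b [c [ab ac bc [ha hb hc]]]]] := three_col tt.
case: (eqVneq k b) => [->|kb].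
  exists (tperm a c); rewrite odd_tperm ac tperm_colstab ?ha ?hc //.
  by rewrite tpermD // eq_sym.
case: (eqVneq k c) => [->|kc].
  exists (tperm a b); rewrite odd_tperm ab tperm_colstab ?ha ?hb //.
  by rewrite tpermD // eq_sym.
exists (tperm b c); rewrite odd_tperm bc tperm_colstab ?hb ?hc //.
by rewrite tpermD // eq_sym.
Qed.

Lemma alt_single (t : 'I_N -> nat * nat) : is_tableau (shp m) t ->
  forall k (psi : 'I_N -> R),
  \sum_(p | colstab t p) (-1) ^+ odd_perm p * psi (p k) = 0.
Proof.
move=> tt k psi; have [u [ou cu uk]] := fix_odd tt k.
apply: (alt_pair (u := u)) => // p.
  by rewrite colstabMl.
by rewrite permM uk.
Qed.

Lemma back (A : 'M[R]_N) :
  (forall i j k, A i j - A j i + A j k - A k j = A i k - A k i) ->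
  fourier_vanishes (lop_obj A) (shp m).
Proof.
move=> H t tt r; rewrite expand; apply: big1 => s _.
suff -> : \sum_(p | colstab t p) (-1) ^+ odd_perm p * lop_obj A (p * s)%g = 0
  by rewrite mulr0.
pose i0 : 'I_N := ord0.
pose phi u := (A u i0 - A i0 u) / 2.
pose S u v := (A u v + A v u) / 2.
have HS : forall u v, S u v = S v u by move=> u v; rewrite /S addrC.
have HA : forall u v, A u v = S u v + (phi u - phi v).
  move=> u v; have := H u i0 v; rewrite /S /phi; lra.
have dec : forall q : 'S_N, lop_obj A q =
    \sum_(i < N) \sum_(j < N | (i < j)%N) S i j +
    \sum_(i < N) \sum_(j < N | (i < j)%N) (phi (q i) - phi (q j)).
  move=> q; rewrite /lop_obj -(sym_const q HS) -big_split /=.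
  apply: eq_bigr => i _; rewrite -big_split; apply: eq_bigr => j _; exact: HA.
under eq_bigr do rewrite dec mulrDr.
rewrite big_split /=.
rewrite (alt_single tt i0 (fun _ => \sum_(i < N) \sum_(j < N | (i < j)%N) S i j)) add0r.
rewrite (eq_bigr (fun p => \sum_(i < N) \sum_(j < N | (i < j)%N)
   ((-1) ^+ odd_perm p * phi ((p * s)%g i) - (-1) ^+ odd_perm p * phi ((p * s)%g j)))); last first.
  move=> p _; rewrite big_distrr; apply: eq_bigr => i _; rewrite big_distrr.
  apply: eq_bigr => j _.
  by rewrite /= mulrBr.
rewrite exchange_big big1 // => i _; rewrite exchange_big big1 // => j _.
have E k : \sum_(p | colstab t p) (-1) ^+ odd_perm p * phi ((p * s)%g k) = 0.
  rewrite (eq_bigr (fun p => (-1) ^+ odd_perm p * (fun x => phi (s x)) (p k))).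
    exact: (alt_single tt k (fun x => phi (s x))).
  by move=> p _; rewrite permM.
by rewrite sumrB !E subrr.
Qed.

End Back2.


Section Fwd.
Variable R : realType.
Variable m : nat.
Local Notation N := m.+3.

Definition i0 : 'I_N := @Ordinal N 0 isT.
Definition i1 : 'I_N := @Ordinal N 1 isT.
Definition i2 : 'I_N := @Ordinal N 2 isT.

Definition t0 (i : 'I_N) : nat * nat :=
  if (i < 3)%N then (nat_of_ord i, 0%N) else (0%N, (i - 2)%N).

Lemma t0_tab : is_tableau (shp m) t0.
Proof.
split.
  move=> i j; rewrite /t0; case: ifP => hi; case: ifP => hj /eqP;
    rewrite xpair_eqE => /andP[/eqP e1 /eqP e2]; apply: ord_inj; lia.
move=> i; rewrite /t0 /in_shape /shp; case: ifP => hi /=.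
  by case: i hi => [[|[|[|k]]] hk] //= _; rewrite subSS subSS subn0.
by rewrite subSS subSS subn0; case: i hi => k hk /= hk3; lia.
Qed.

Lemma cs_fix p : colstab t0 p -> forall k : 'I_N, (3 <= k)%N -> p k = k.
Proof.
move=> /forallP H k hk; have := H k; rewrite /t0.
have -> : (k < 3)%N = false by lia.
case: ifP => /= h /eqP e; first lia.
apply: ord_inj; lia.
Qed.

Lemma cs_lt3 p : colstab t0 p -> forall k : 'I_N, (k < 3)%N -> (p k < 3)%N.
Proof.
move=> /forallP H k hk; have := H k; rewrite /t0 hk /=.
case: ifP => // h /eqP /= e; lia.
Qed.

Lemma cs_tp (a b : 'I_N) : (a < 3)%N -> (b < 3)%N -> colstab t0 (tperm a b).
Proof. by move=> ha hb; apply: tperm_colstab; rewrite /t0 ha hb. Qed.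

Lemma cs1 : colstab t0 1%g.
Proof. by apply/forallP => i; rewrite perm1. Qed.


Lemma sum_cut (F : 'I_N -> R) (j : 'I_N) :
  \sum_(i < N | (i < j.+1)%N) F i = \sum_(i < N | (i < j)%N) F i + F j.
Proof.
rewrite (bigD1 j) //= addrC; congr (_ + _); apply: eq_bigl => i.
by rewrite ltnS ltn_neqAle andbC.
Qed.

Lemma sum0 (F : 'I_N -> R) : \sum_(i < N | (i < 0)%N) F i = 0.
Proof. by rewrite big_pred0 // => i; rewrite ltn0. Qed.

Lemma sum3 (F : 'I_N -> R) : \sum_(i < N | (i < 3)%N) F i = F i0 + F i1 + F i2.
Proof. by rewrite (sum_cut F i2) (sum_cut F i1) (sum_cut F i0) sum0 add0r. Qed.

Definition Lf (A : 'M[R]_N) (q : 'S_N) :=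
  A (q i0) (q i1) + A (q i0) (q i2) + A (q i1) (q i2).
Definition Rest (A : 'M[R]_N) (q : 'S_N) :=
  \sum_(j < N | ~~ (j < 3)%N) \sum_(i < N | (i < j)%N) A (q i) (q j).

Lemma lop_dec (A : 'M[R]_N) q : lop_obj A q = Lf A q + Rest A q.
Proof.
rewrite /lop_obj (exchange_big_dep xpredT) //=.
rewrite (bigID (fun j : 'I_N => (j < 3)%N)) /=; congr (_ + _).
rewrite sum3 /= (sum_cut _ i1) (sum_cut _ i0) sum0 (sum_cut _ i0) !sum0.
rewrite /Lf; lra.
Qed.


Lemma rest_inv A (p s : 'S_N) : colstab t0 p -> Rest A (p * s)%g = Rest A s.
Proof.
move=> cp; apply: eq_bigr => j hj.
have hj3 : (3 <= j)%N by rewrite leqNgt.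
rewrite permM (cs_fix cp hj3).
rewrite [RHS](reindex_inj (perm_inj (s:=p))) /=.
apply: eq_big => i; last by move=> _; rewrite permM.
case: (ltnP i 3) => hi.
  by rewrite (leq_trans hi hj3) (leq_trans (cs_lt3 cp hi) hj3).
by rewrite (cs_fix cp hi).
Qed.

Lemma lt3_cases (k : 'I_N) : (k < 3)%N -> [\/ k = i0, k = i1 | k = i2].
Proof.
case: k => [[|[|[|k]]] hk] // _; [apply: Or31|apply: Or32|apply: Or33]; exact: ord_inj.
Qed.

Definition lst : seq 'S_N := [:: 1%g; tperm i2 i1; tperm i1 i0;
  (tperm i2 i1 * tperm i1 i0)%g; tperm i2 i0; (tperm i2 i1 * tperm i2 i0)%g].

Lemma cs_only p : colstab t0 p -> p \in lst.
Proof.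
move=> cp.
have : exists u v : 'I_N, [/\ (u < 3)%N, (v < 3)%N, v != i0 &
   p = (tperm v i1 * tperm u i0)%g].
  set u := p i0.
  have hu : (u < 3)%N := cs_lt3 cp (isT : (i0 < 3)%N).
  set t1 := tperm u i0.
  have c1 : colstab t0 t1 := cs_tp hu (isT : (i0 < 3)%N).
  set p' := (p * t1)%g.
  have cp' : colstab t0 p' := colstabM cp c1.
  have p'0 : p' i0 = i0 by rewrite permM tpermL.
  set v := p' i1.
  have hv : (v < 3)%N := cs_lt3 cp' (isT : (i1 < 3)%N).
  have v0 : v != i0 by rewrite -p'0 /v (inj_eq perm_inj).
  set t2 := tperm v i1.
  have p''1 : (p' * t2)%g = 1%g.
    apply/permP => k; rewrite perm1 permM.
    case: (ltnP k 3) => hk; last first.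
      rewrite (cs_fix cp' hk) tpermD //; apply/eqP => e; move: hk; rewrite -e //.
      by rewrite leqNgt hv.
    case/lt3_cases: hk => ->.
    - by rewrite p'0 tpermD.
    - by rewrite -/v tpermL.
    - case/lt3_cases: (cs_lt3 cp' (isT : (i2 < 3)%N)) => e2.
      + by move/eqP: e2; rewrite -{1}p'0 (inj_eq perm_inj).
      + have vi2 : v = i2.
          have : v != i1 by rewrite /v -{2}e2 (inj_eq perm_inj).
          by move=> h; case/lt3_cases: hv h v0 => ->; rewrite ?eqxx.
        by rewrite e2 /t2 vi2 tpermR.
      + rewrite e2 tpermD //.
        by apply/eqP => e; have := perm_inj (etrans e2 (esym e)).
  exists u, v; split => //.
  by rewrite -[p](mulgK t1) -/p' -[p'](mulgK t2) p''1 mul1g !tpermV.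
case=> a [b [ha hb b0 ->]].
case/lt3_cases: hb b0 => -> // _; case/lt3_cases: ha => ->;
  by rewrite ?tperm1 ?mulg1 ?mul1g !inE eqxx ?orbT.
Qed.


Lemma tpE (x y z : 'I_N) : tperm x y z = if z == x then y else if z == y then x else z.
Proof. by case: tpermP => [->|->|/eqP/negbTE-> /eqP/negbTE->]; rewrite ?eqxx //; case: eqP => // ->. Qed.

Lemma lst_cs q : q \in lst -> colstab t0 q.
Proof.
rewrite !inE; do ![case/orP=> [/eqP->|]]; try move/eqP->;
  first [exact: cs1 | exact: cs_tp | apply: colstabM; exact: cs_tp].
Qed.

Lemma lst_uniq : uniq lst.
Proof.
apply: (map_uniq (f := fun q : 'S_N => (nat_of_ord (q i0), nat_of_ord (q i1)))).
rewrite /= !permM !perm1.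
by rewrite !tpE.
Qed.


Lemma alt_L (A : 'M[R]_N) (s : 'S_N) :
  \sum_(p | colstab t0 p) (-1) ^+ odd_perm p * Lf A (p * s)%g =
  (A (s i0) (s i1) - A (s i1) (s i0)) + (A (s i1) (s i2) - A (s i2) (s i1))
  + (A (s i2) (s i0) - A (s i0) (s i2)).
Proof.
rewrite (eq_bigl (fun p => p \in lst)); last first.
  by move=> p; apply/idP/idP => [/cs_only|/lst_cs].
rewrite -big_uniq ?lst_uniq //= !big_cons big_nil.
rewrite /Lf !permM !perm1 !odd_permM !odd_tperm odd_perm1 !tpE /=.
lra.
Qed.

End Fwd.


Section Fwd2.
Variable R : realType.
Variable m : nat.
Local Notation N := m.+3.
Local Notation t0 := (@t0 m).
Local Notation i0 := (@i0 m).
Local Notation i1 := (@i1 m).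
Local Notation i2 := (@i2 m).

Lemma cycE (A : 'M[R]_N) (s : 'S_N) :
  \sum_(p | colstab t0 p) (-1) ^+ odd_perm p * lop_obj A (p * s)%g =
  (A (s i0) (s i1) - A (s i1) (s i0)) + (A (s i1) (s i2) - A (s i2) (s i1))
  + (A (s i2) (s i0) - A (s i0) (s i2)).
Proof.
under eq_bigr => p cp do rewrite lop_dec (rest_inv A s cp) mulrDr.
rewrite big_split /= alt_L.
rewrite (eq_bigr (fun p => (-1) ^+ odd_perm p * (fun _ : 'I_N => Rest A s) (p i0))) //.
by rewrite (alt_single (@t0_tab m) i0 (fun _ => Rest A s)) addr0.
Qed.

Lemma key (A : 'M[R]_N) : fourier_vanishes (lop_obj A) (shp m) ->
  forall x y : 'I_N, x != y ->
  \sum_(w | (w != x) && (w != y))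
     ((A w x - A x w) + (A x y - A y x) + (A y w - A w y)) = 0.
Proof.
move=> H x y xy.
pose r (k : 'I_N) := if k == x then 1%N else if k == y then 2%N else 0%N.
have := H t0 (@t0_tab m) r; rewrite expand.
have SR : forall s : 'S_N, same_rows (fun i => r (s i)) (fun i => (t0 i).1) =
    (s i1 == x) && (s i2 == y).
  move=> s; apply/forallP/andP => [Hs|[/eqP e1 /eqP e2] i].
  - split.
      by have := Hs i1; rewrite /r /t0 /=; case: (s i1 == x); case: (s i1 == y).
    by have := Hs i2; rewrite /r /t0 /=; case: (s i2 == x); case: (s i2 == y).
  - rewrite /r /t0.
    case: (eqVneq i i1) => [->|ni1]; first by rewrite e1 eqxx.
    case: (eqVneq i i2) => [->|ni2]; first by rewrite e2 (negbTE (_ : y != x)) ?eqxx // eq_sym.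
    have nx : s i != x by rewrite -e1 (inj_eq perm_inj).
    have ny : s i != y by rewrite -e2 (inj_eq perm_inj).
    rewrite (negbTE nx) (negbTE ny).
    case: ifP => //= hi; apply/eqP; move: ni1 ni2 hi; rewrite -!val_eqE /=; lia.
under eq_bigr do rewrite SR cycE.
rewrite (eq_bigr (fun s : 'S_N => if (s i1 == x) && (s i2 == y) then
   (A (s i0) x - A x (s i0)) + (A x y - A y x) + (A y (s i0) - A (s i0) y) else 0));
   last first.
  move=> s _; case: ifP => [/andP[/eqP-> /eqP->]|_] /=;
  by rewrite ?mulr1n ?mulr0n ?mul1r ?mul0r.
rewrite -big_mkcond /= => Phi.
pose h w := (A w x - A x w) + (A x y - A y x) + (A y w - A w y).
have Hk : forall k : 'I_N, k != i1 -> k != i2 ->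
    \sum_(s : 'S_N | (s i1 == x) && (s i2 == y)) h (s k) = 0.
  move=> k k1 k2; rewrite -[X in _ = X]Phi [LHS](reindex_inj (mulgI (tperm i0 k))) /=.
  apply: eq_big => s; first by rewrite !permM !tpermD.
  by move=> _; rewrite permM tpermR.
have : \sum_(k : 'I_N | (k != i1) && (k != i2))
    \sum_(s : 'S_N | (s i1 == x) && (s i2 == y)) h (s k) = 0.
  by apply: big1 => k /andP[k1 k2]; apply: Hk.
rewrite exchange_big /=.
rewrite (eq_bigr (fun _ => \sum_(w | (w != x) && (w != y)) h w)); last first.
  move=> s /andP[/eqP e1 /eqP e2].
  rewrite [RHS](reindex_inj (perm_inj (s:=s))) /=; apply: eq_bigl => k.
  by rewrite -e1 -e2 !(inj_eq perm_inj).
rewrite sumr_const => /eqP; rewrite mulrn_eq0 => /orP[|/eqP //].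
pose s0 := (tperm i2 (tperm i1 x y) * tperm i1 x)%g.
have y1 : tperm i1 x y != i1.
  apply/eqP => e; move: xy; rewrite -(tpermK i1 x y) e tpermL eqxx //.
have w1 : s0 i1 = x by rewrite permM (@tpermD _ i2 _ i1) ?tpermL.
have w2 : s0 i2 = y by rewrite permM tpermL tpermK.
move/eqP/card0_eq => /(_ s0); rewrite unfold_in /= w1 w2 !eqxx //.
Qed.

End Fwd2.


Section Fwd3.
Variable R : realType.
Variable m : nat.
Local Notation N := m.+3.

Lemma fwd (A : 'M[R]_N) : fourier_vanishes (lop_obj A) (shp m) ->
  forall i j k, A i j - A j i + A j k - A k j = A i k - A k i.
Proof.
move=> H.
have full : forall x y, (A x y - A y x) *+ N =
    \sum_(w < N) (A x w - A w x) - \sum_(w < N) (A y w - A w y).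
  move=> x y; case: (eqVneq x y) => [<-|xy]; first by rewrite !subrr mul0rn.
  have K := key H xy.
  have E : \sum_(w < N) ((A w x - A x w) + (A x y - A y x) + (A y w - A w y)) = 0.
    rewrite (bigD1 x) //= (bigD1 y) /=; last by rewrite eq_sym.
    rewrite K; lra.
  rewrite big_split big_split /= sumr_const card_ord in E.
  have Sx : \sum_(w < N) (A w x - A x w) = - \sum_(w < N) (A x w - A w x).
    by rewrite -sumrN; apply: eq_bigr => w _; rewrite opprB.
  rewrite Sx in E; lra.
move=> i j k.
have e : A i j - A j i + A j k - A k j - (A i k - A k i) =
   (A i j - A j i) + (A j k - A k j) - (A i k - A k i) by lra.
suff : (A i j - A j i + A j k - A k j - (A i k - A k i)) *+ N = 0.
  by move/eqP; rewrite mulrn_eq0 /= => /eqP; lra.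
rewrite e mulrnBl mulrnDl !full; lra.
Qed.

End Fwd3.

Theorem proposition1 (R : realType) (n : nat) (A : 'M[R]_n) :
  (3 <= n)%N ->
  (forall i, A i i = 0) ->
  (fourier_vanishes (lop_obj A) [:: (n - 2)%N; 1%N; 1%N] <->
   (forall i j k : 'I_n, A i j - A j i + A j k - A k j = A i k - A k i)).
Proof.
case: n A => [|[|[|m]]] A // _ _; split.
  exact: fwd.
exact: back.
Qed.
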